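(* Let $f,g\in\mathrm{Diff}(\mathbb{C},0)$ be two holomorphic diffeomorphisms fixing the origin, both distinct from the identity, and let $W(a,b)$ be a non-trivial reduced word in $a,a^{-1},b,b^{-1}$. If there exists a formal series $\hat h\in\widehat{\mathrm{Diff}}(\mathbb{C},0)$ such that $W(f,\hat h^{-1}\circ g\circ\hat h)\neq\mathrm{id}$, then there also exists $h\in\mathrm{Diff}(\mathbb{C},0)$ such that $W(f,h^{-1}\circ g\circ h)\neq\mathrm{id}$. In fact, the set of $h\in\mathrm{Diff}(\mathbb{C},0)$ such that $W(f,h^{-1}\circ g\circ h)\neq\mathrm{id}$ is open and dense for the analytic topology.
   Context: $\mathrm{Diff}(\mathbb{C},0)$ is the group of germs of holomorphic diffeomorphisms of $\mathbb{C}$ fixing $0$; $\widehat{\mathrm{Diff}}(\mathbb{C},0)$ is the group (under composition) of formal series $\sum_{i\ge1}c_ix^i$ with $c_1\neq0$, into which $\mathrm{Diff}(\mathbb{C},0)$ injects via Taylor series at $0$. $W(f,g)$ denotes the element obtained by substituting $a=f$, $a^{-1}=f^{-1}$, $b=g$, $b^{-1}=g^{-1}$ and composing (as germs or formal series). Analytic topology: for $r>0$ and $h$ holomorphic near $0$, $\|h\|_r=\sup_{B(r)}|h|$ if $h$ extends holomorphically to the open disc $B(r)$ of radius $r$, and $+\infty$ otherwise; a basis of open sets of $\mathrm{Diff}(\mathbb{C},0)$ is given by the sets $\{g:\|g-f\|_r<\varepsilon\}$, $f\in\mathrm{Diff}(\mathbb{C},0)$, $r,\varepsilon>0$. *)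

(* Defs.v *)
From Stdlib Require Import Reals List ClassicalEpsilon.
From Coquelicot Require Import Coquelicot.
Import ListNotations.
Open Scope R_scope.

Definition fps := nat -> C.

Definition fmul (a b : fps) : fps :=
  fun n => sum_n (fun k => Cmult (a k) (b (n - k)%nat)) n.
Definition fone : fps := fun n => match n with O => RtoC 1 | _ => RtoC 0 end.
Fixpoint fpow (a : fps) (k : nat) : fps :=
  match k with O => fone | S k' => fmul a (fpow a k') end.

(** Composition (a o b), meaningful when b 0 = 0 : (a o b)_n = sum_{k<=n} a_k (b^k)_n. *)
Definition fcomp (a b : fps) : fps :=
  fun n => sum_n (fun k => Cmult (a k) (fpow b k n)) n.

Definition fid : fps := fun n => match n with 1%nat => RtoC 1 | _ => RtoC 0 end.

Definition is_fdiff (a : fps) : Prop := a O = RtoC 0 /\ a 1%nat <> RtoC 0.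

Definition finv (a : fps) : fps :=
  epsilon (inhabits fid)
    (fun b => b O = RtoC 0 /\ fcomp a b = fid /\ fcomp b a = fid).

(** Germs in Diff(C,0), identified with their (convergent) Taylor series at 0
    via the injection Diff(C,0) -> \hat{Diff}(C,0). *)
Definition is_germ (a : fps) : Prop :=
  is_fdiff a /\ exists r, 0 < r /\ ex_series (fun n => Cmod (a n) * r ^ n).

Inductive letter := La | LaInv | Lb | LbInv.
Definition linv (x : letter) : letter :=
  match x with La => LaInv | LaInv => La | Lb => LbInv | LbInv => Lb end.
Fixpoint reduced (w : list letter) : Prop :=
  match w with
  | x :: ((y :: _) as w') => y <> linv x /\ reduced w'
  | _ => True
  end.

Definition lval (f g : fps) (x : letter) : fps :=
  match x with La => f | LaInv => finv f | Lb => g | LbInv => finv g end.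
Definition weval (w : list letter) (f g : fps) : fps :=
  fold_right (fun x acc => fcomp (lval f g x) acc) fid w.

Definition fconj (h g : fps) : fps := fcomp (finv h) (fcomp g h).

(** The germ h (Taylor series h) extends holomorphically
    to B(r) iff its power series converges on B(r); its extension there is the
    sum of the series.  [ext_disc h r] = h extends to B(r). *)
Definition ext_disc (h : fps) (r : R) : Prop :=
  forall z : C, Cmod z < r -> exists l : C, is_series (fun n => Cmult (h n) (pow_n z n)) l.

Definition fsub (a b : fps) : fps := fun n => Cminus (a n) (b n).

(** ||h||_r = sup_{B(r)} |h| (= +oo if h does not extend to B(r)).
    [norm_lt h r eps] <-> ||h||_r < eps. *)
Definition norm_lt (h : fps) (r eps : R) : Prop :=
  ext_disc h r /\
  exists M, M < eps /\
    forall z l, Cmod z < r -> is_series (fun n => Cmult (h n) (pow_n z n)) l -> Cmod l <= M.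

Definition anball (f : fps) (r eps : R) (g : fps) : Prop := norm_lt (fsub g f) r eps.

(** Subsets of Diff(C,0) are predicates (only their germ elements matter). *)
Definition an_open (U : fps -> Prop) : Prop :=
  forall g, is_germ g -> U g ->
    exists f r eps, is_germ f /\ 0 < r /\ 0 < eps /\ anball f r eps g /\
      forall k, is_germ k -> anball f r eps k -> U k.

Definition an_dense (U : fps -> Prop) : Prop :=
  forall V, an_open V -> (exists g, is_germ g /\ V g) ->
    exists g, is_germ g /\ V g /\ U g.

(* Main.v *)
Require Import Defs.
From Stdlib Require Import Reals List Lia Arith Lra FunctionalExtensionality ClassicalEpsilon Classical.
From Coquelicot Require Import Coquelicot.

Lemma sum_zero (u : nat -> C) n : (forall k, (k <= n)%nat -> u k = RtoC 0) -> sum_n u n = RtoC 0.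
Proof.
  induction n; intros H.
  - rewrite sum_O. apply H; lia.
  - rewrite sum_Sn, IHn by (intros; apply H; lia). rewrite H by lia.
    change (Cplus 0 0 = 0)%C. ring.
Qed.

Lemma sum_extend (u : nat -> C) n m : (n <= m)%nat ->
  (forall k, (n < k <= m)%nat -> u k = RtoC 0) -> sum_n u m = sum_n u n.
Proof.
  induction m; intros Hnm H.
  - replace n with 0%nat by lia. reflexivity.
  - destruct (Nat.eq_dec n (S m)) as [->|Hne]; [reflexivity|].
    rewrite sum_Sn, IHm by (try lia; intros; apply H; lia).
    rewrite H by lia. change (Cplus (sum_n u n) 0 = sum_n u n). ring.
Qed.

Lemma sum_single (u : nat -> C) n i : (i <= n)%nat ->
  (forall k, (k <= n)%nat -> k <> i -> u k = RtoC 0) -> sum_n u n = u i.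
Proof.
  induction n; intros Hi H.
  - replace i with 0%nat by lia. apply sum_O.
  - rewrite sum_Sn. destruct (Nat.eq_dec i (S n)) as [->|Hne].
    + rewrite sum_zero by (intros; apply H; lia). change (Cplus 0 (u (S n)) = u (S n)). ring.
    + rewrite IHn by (try lia; intros; apply H; lia). rewrite (H (S n)) by lia.
      change (Cplus (u i) 0 = u i). ring.
Qed.

Lemma sum_shift (G : nat -> C) i n : (i <= n)%nat ->
  sum_n (fun k => if le_dec i k then G (k - i)%nat else RtoC 0) n = sum_n G (n - i).
Proof.
  induction n; intros Hi.
  - replace i with 0%nat by lia. rewrite !sum_O. destruct le_dec; [|lia]. reflexivity.
  - destruct (Nat.eq_dec i (S n)) as [->|Hne].
    + rewrite sum_Sn, sum_zero.
      * destruct le_dec; [|lia]. replace (S n - S n)%nat with 0%nat by lia. rewrite sum_O.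
        change (Cplus 0 (G 0%nat) = G 0%nat). ring.
      * intros k Hk. destruct le_dec; [lia|reflexivity].
    + rewrite sum_Sn, IHn by lia. destruct le_dec; [|lia].
      replace (S n - i)%nat with (S (n - i)) by lia. rewrite sum_Sn.
      replace (S n - i)%nat with (S (n - i)) by lia. reflexivity.
Qed.

Lemma sum_triangle (F : nat -> nat -> C) n :
  sum_n (fun k => sum_n (fun i => F i (k - i)%nat) k) n =
  sum_n (fun i => sum_n (fun j => F i j) (n - i)) n.
Proof.
  transitivity (sum_n (fun k => sum_n (fun i => if le_dec i k then F i (k - i)%nat else RtoC 0) n) n).
  - apply sum_n_ext_loc. intros k Hk. rewrite (sum_extend _ k n) by (first [lia | intros; destruct le_dec; [lia|reflexivity]]).
    apply sum_n_ext_loc. intros i Hi. destruct le_dec; [reflexivity|lia].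
  - rewrite sum_n_switch. apply sum_n_ext_loc. intros i Hi. apply (sum_shift (fun j => F i j)). exact Hi.
Qed.

Lemma sum_mult_l (a : C) (u : nat -> C) n : sum_n (fun k => Cmult a (u k)) n = Cmult a (sum_n u n).
Proof. apply (sum_n_mult_l a u n). Qed.
Lemma sum_mult_r (a : C) (u : nat -> C) n : sum_n (fun k => Cmult (u k) a) n = Cmult (sum_n u n) a.
Proof. apply (sum_n_mult_r a u n). Qed.
Lemma sum_plus (u v : nat -> C) n : sum_n (fun k => Cplus (u k) (v k)) n = Cplus (sum_n u n) (sum_n v n).
Proof. apply (sum_n_plus u v n). Qed.

Ltac cring := match goal with |- @eq _ ?a ?b => change (@eq C a b); ring end.


Lemma fmul_assoc a b c : fmul (fmul a b) c = fmul a (fmul b c).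
Proof.
  apply functional_extensionality. intro n. unfold fmul.
  transitivity (sum_n (fun m => sum_n (fun i => (fun i j => Cmult (a i) (Cmult (b j) (c (n - (i + j))%nat))) i (m - i)%nat) m) n).
  - apply sum_n_ext_loc. intros m Hm. rewrite <- sum_mult_r. apply sum_n_ext_loc. intros i Hi.
    replace (n - (i + (m - i)))%nat with (n - m)%nat by lia. cbv beta. change (Cmult (Cmult (a i) (b (m - i)%nat)) (c (n - m)%nat) = Cmult (a i) (Cmult (b (m - i)%nat) (c (n - m)%nat))). cring.
  - pose proof (sum_triangle (fun i j => Cmult (a i) (Cmult (b j) (c (n - (i + j))%nat))) n) as T.
    cbv beta in T. cbv beta. rewrite T. apply sum_n_ext_loc. intros i Hi. rewrite <- sum_mult_l.
    apply sum_n_ext_loc. intros j Hj. replace (n - i - j)%nat with (n - (i + j))%nat by lia. reflexivity.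
Qed.

Lemma fmul_one_l b : fmul fone b = b.
Proof.
  apply functional_extensionality. intro n. unfold fmul.
  rewrite (sum_single _ n 0) by (first [lia | intros k _ Hk; destruct k; [lia|]; simpl; change (Cmult 0 (b (n - S k)%nat) = 0); cring]).
  simpl. replace (n - 0)%nat with n by lia. change (Cmult 1 (b n) = b n). cring.
Qed.

Lemma fmul_one_r b : fmul b fone = b.
Proof.
  apply functional_extensionality. intro n. unfold fmul.
  rewrite (sum_single _ n n).
  - replace (n - n)%nat with 0%nat by lia. simpl. change (Cmult (b n) 1 = b n). cring.
  - lia.
  - intros k Hk Hne. destruct (n - k)%nat eqn:E; [lia|]. simpl. change (Cmult (b k) 0 = 0). cring.
Qed.

Lemma fpow_add c i j : fpow c (i + j) = fmul (fpow c i) (fpow c j).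
Proof.
  induction i; simpl.
  - now rewrite fmul_one_l.
  - rewrite IHi. now rewrite fmul_assoc.
Qed.

Lemma fpow_vanish c : c 0%nat = RtoC 0 -> forall k n, (n < k)%nat -> fpow c k n = RtoC 0.
Proof.
  intros H0. induction k; intros n Hn; [lia|]. simpl. unfold fmul.
  apply sum_zero. intros i Hi. destruct i.
  - rewrite H0. change (Cmult 0 (fpow c k (n - 0)%nat) = 0). cring.
  - rewrite IHk by lia. change (Cmult (c (S i)) 0 = 0). cring.
Qed.

Lemma fpow_diag c : c 0%nat = RtoC 0 -> forall k, fpow c k k = pow_n (c 1%nat) k.
Proof.
  intros H0. induction k.
  - reflexivity.
  - simpl. unfold fmul. rewrite (sum_single _ (S k) 1).
    + replace (S k - 1)%nat with k by lia. rewrite IHk. reflexivity.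
    + lia.
    + intros i Hi Hne. destruct i.
      * rewrite H0. change (Cmult 0 (fpow c k (S k - 0)%nat) = 0). cring.
      * rewrite (fpow_vanish c H0) by lia. change (Cmult (c (S i)) 0 = 0). cring.
Qed.

Lemma fcomp_extend a b n M : b 0%nat = RtoC 0 -> (n <= M)%nat ->
  fcomp a b n = sum_n (fun k => Cmult (a k) (fpow b k n)) M.
Proof.
  intros H0 HM. unfold fcomp. symmetry. apply sum_extend; auto.
  intros k Hk. rewrite (fpow_vanish b H0) by lia. change (Cmult (a k) 0 = 0). cring.
Qed.

Lemma sum_prod (u v : nat -> C) n m :
  Cmult (sum_n u n) (sum_n v m) = sum_n (fun i => sum_n (fun j => Cmult (u i) (v j)) m) n.
Proof.
  rewrite <- sum_mult_r. apply sum_n_ext. intros i. rewrite <- sum_mult_l. reflexivity.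
Qed.

Lemma fcomp_mul p q c : c 0%nat = RtoC 0 ->
  fcomp (fmul p q) c = fmul (fcomp p c) (fcomp q c).
Proof.
  intros H0. apply functional_extensionality. intro n.
  transitivity (sum_n (fun i => sum_n (fun j => Cmult (Cmult (p i) (q j)) (fpow c (i + j) n)) (n - i)) n).
  - pose proof (sum_triangle (fun i j => Cmult (Cmult (p i) (q j)) (fpow c (i + j) n)) n) as T.
    cbv beta in T. rewrite <- T. unfold fcomp, fmul at 1. apply sum_n_ext_loc. intros k Hk.
    rewrite <- sum_mult_r. apply sum_n_ext_loc. intros i Hi. replace (i + (k - i))%nat with k by lia. reflexivity.
  - unfold fmul at 1.
    transitivity (sum_n (fun m => sum_n (fun i => sum_n (fun j =>
       Cmult (Cmult (p i) (q j)) (Cmult (fpow c i m) (fpow c j (n - m)%nat))) n) n) n).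
    + rewrite sum_n_switch. apply sum_n_ext_loc. intros i Hi.
      rewrite sum_n_switch.
      rewrite <- (sum_extend _ (n - i) n) by (first [lia | intros j Hj; rewrite (fpow_vanish c H0) by lia;
          change (Cmult (Cmult (p i) (q j)) 0 = 0); cring]).
      apply sum_n_ext_loc. intros j Hj. rewrite fpow_add. unfold fmul.
      rewrite <- sum_mult_l. reflexivity.
    + apply sum_n_ext_loc. intros m Hm. rewrite (fcomp_extend p c m n) by (auto; lia).
      rewrite (fcomp_extend q c (n - m) n) by (auto; lia). rewrite sum_prod.
      apply sum_n_ext. intro i. apply sum_n_ext. intro j. cring.
Qed.

Lemma fcomp_one c : fcomp fone c = fone.
Proof.
  apply functional_extensionality. intro n. unfold fcomp.
  rewrite (sum_single _ n 0) by (first [lia | intros k _ Hk; destruct k; [lia|]; simpl; change (Cmult 0 (fpow c (S k) n) = 0); cring]).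
  simpl. change (Cmult 1 (fone n) = fone n). cring.
Qed.

Lemma fcomp_pow b c k : c 0%nat = RtoC 0 -> fcomp (fpow b k) c = fpow (fcomp b c) k.
Proof.
  intros H0. induction k; simpl.
  - apply fcomp_one.
  - rewrite fcomp_mul by auto. now rewrite IHk.
Qed.

Lemma fcomp_0 a b : fcomp a b 0%nat = a 0%nat.
Proof. unfold fcomp. rewrite sum_O. simpl. change (Cmult (a 0%nat) 1 = a 0%nat). cring. Qed.

Lemma fpow1 b : fpow b 1 = b.
Proof. simpl. apply fmul_one_r. Qed.

Lemma fcomp_1 a b : fcomp a b 1%nat = Cmult (a 1%nat) (b 1%nat).
Proof.
  unfold fcomp. rewrite sum_Sn, sum_O. rewrite fpow1. simpl.
  change (Cplus (Cmult (a 0%nat) 0) (Cmult (a 1%nat) (b 1%nat)) = Cmult (a 1%nat) (b 1%nat)). cring.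
Qed.

Lemma fcomp_assoc a b c : b 0%nat = RtoC 0 -> c 0%nat = RtoC 0 ->
  fcomp (fcomp a b) c = fcomp a (fcomp b c).
Proof.
  intros Hb Hc. apply functional_extensionality. intro n. unfold fcomp at 1.
  transitivity (sum_n (fun j => sum_n (fun k => Cmult (a k) (Cmult (fpow b k j) (fpow c j n))) n) n).
  - apply sum_n_ext_loc. intros j Hj. rewrite (fcomp_extend a b j n) by auto.
    rewrite <- sum_mult_r. apply sum_n_ext. intro k. cring.
  - rewrite sum_n_switch.
    change (fcomp a (fcomp b c) n) with (sum_n (fun k => Cmult (a k) (fpow (fcomp b c) k n)) n).
    apply sum_n_ext_loc. intros k Hk.
    rewrite sum_mult_l. rewrite <- fcomp_pow by auto. reflexivity.
Qed.

Lemma fpow_fid k n : fpow fid k n = if Nat.eq_dec k n then RtoC 1 else RtoC 0.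
Proof.
  revert n. induction k; intro n.
  - destruct n; [destruct (Nat.eq_dec 0 0) | destruct (Nat.eq_dec 0 (S n))]; try lia; reflexivity.
  - change (fpow fid (S k)) with (fmul fid (fpow fid k)). unfold fmul. destruct n.
    + rewrite sum_O. destruct (Nat.eq_dec (S k) 0); [lia|]. change (fid 0%nat) with (RtoC 0). cring.
    + rewrite (sum_single _ (S n) 1).
      * rewrite IHk. change (fid 1%nat) with (RtoC 1). replace (S n - 1)%nat with n by lia.
        destruct (Nat.eq_dec k n), (Nat.eq_dec (S k) (S n)); try lia; cring.
      * lia.
      * intros i Hi Hne. destruct i as [|[|i]]; try lia; change (fid ?x) with (RtoC 0); cring.
Qed.

Lemma fcomp_fid_r a : fcomp a fid = a.
Proof.
  apply functional_extensionality. intro n. unfold fcomp.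
  rewrite (sum_single _ n n) by (first [lia | intros k Hk Hne; rewrite fpow_fid; destruct Nat.eq_dec; [lia|];
     change (Cmult (a k) 0 = 0); cring]).
  rewrite fpow_fid. destruct Nat.eq_dec; [|lia]. change (Cmult (a n) 1 = a n). cring.
Qed.

Lemma fcomp_fid_l c : c 0%nat = RtoC 0 -> fcomp fid c = c.
Proof.
  intros H0. apply functional_extensionality. intro n. unfold fcomp. destruct n.
  - rewrite sum_O, H0. simpl. change (Cmult 0 1 = 0). cring.
  - rewrite (sum_single _ (S n) 1) by (first [lia | intros i Hi Hne; destruct i as [|[|i]]; try lia;
         simpl; [change (Cmult 0 (fpow c 0 (S n)) = 0) | change (Cmult 0 (fpow c (S (S i)) (S n)) = 0)]; cring]).
    rewrite fpow1. simpl. change (Cmult 1 (c (S n)) = c (S n)). cring.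
Qed.


Lemma pow_inv_l (x : C) n : x <> RtoC 0 -> Cmult (pow_n (Cinv x) n) (pow_n x n) = RtoC 1.
Proof.
  intros Hx. induction n.
  - simpl. change (Cmult 1 1 = 1). cring.
  - change (pow_n (Cinv x) (S n)) with (Cmult (Cinv x) (pow_n (Cinv x) n)).
    change (pow_n x (S n)) with (Cmult x (pow_n x n)).
    transitivity (Cmult (Cmult (Cinv x) x) (Cmult (pow_n (Cinv x) n) (pow_n x n))).
    + cring.
    + rewrite IHn. rewrite Cinv_l by exact Hx. cring.
Qed.


Fixpoint aux (a : fps) (n : nat) : nat -> C :=
  match n with
  | O => fun _ => RtoC 0
  | S n' => fun j => if le_dec j n' then aux a n' j
      else Cmult (Cminus (fid (S n')) (sum_n (fun k => Cmult (aux a n' k) (fpow a k (S n'))) n'))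
                 (pow_n (Cinv (a 1%nat)) (S n'))
  end.

Definition linv (a : fps) : fps := fun j => aux a j j.

Lemma aux_stable a n : forall j, (j <= n)%nat -> aux a n j = linv a j.
Proof.
  induction n; intros j Hj.
  - replace j with 0%nat by lia. reflexivity.
  - destruct (Nat.eq_dec j (S n)) as [->|Hne]; [reflexivity|].
    simpl. destruct le_dec; [|lia]. apply IHn; lia.
Qed.

Lemma linv_S a n : linv a (S n) =
  Cmult (Cminus (fid (S n)) (sum_n (fun k => Cmult (linv a k) (fpow a k (S n))) n))
        (pow_n (Cinv (a 1%nat)) (S n)).
Proof.
  unfold linv at 1. simpl. destruct le_dec; [lia|]. f_equal. f_equal.
  apply sum_n_ext_loc. intros k Hk. rewrite aux_stable by lia. reflexivity.
Qed.

Lemma linv_spec a : a 0%nat = RtoC 0 -> a 1%nat <> RtoC 0 ->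
  linv a 0%nat = RtoC 0 /\ linv a 1%nat <> RtoC 0 /\ fcomp (linv a) a = fid.
Proof.
  intros H0 H1. split; [reflexivity|]. split.
  - assert (E2 : Cmult (linv a 1%nat) (a 1%nat) = RtoC 1).
    { rewrite linv_S. rewrite sum_O. change (linv a 0%nat) with (RtoC 0).
      change (fid 1%nat) with (RtoC 1). change (pow_n (Cinv (a 1%nat)) 1) with (Cmult (Cinv (a 1%nat)) (RtoC 1)).
      field. exact H1. }
    intro E. rewrite E in E2. assert (E3 : Cmult 0 (a 1%nat) = RtoC 0) by cring. rewrite E3 in E2.
    injection E2. intros. lra.
  - apply functional_extensionality. intro n. destruct n.
    + rewrite fcomp_0. reflexivity.
    + unfold fcomp. rewrite sum_Sn. rewrite fpow_diag by exact H0. rewrite linv_S.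
      set (S0 := sum_n (fun k => Cmult (linv a k) (fpow a k (S n))) n).
      transitivity (Cplus S0 (Cmult (Cminus (fid (S n)) S0) (Cmult (pow_n (Cinv (a 1%nat)) (S n)) (pow_n (a 1%nat) (S n))))).
      * change (Cplus S0 (Cmult (Cmult (Cminus (fid (S n)) S0) (pow_n (Cinv (a 1%nat)) (S n))) (pow_n (a 1%nat) (S n)))
          = Cplus S0 (Cmult (Cminus (fid (S n)) S0) (Cmult (pow_n (Cinv (a 1%nat)) (S n)) (pow_n (a 1%nat) (S n))))). ring.
      * rewrite pow_inv_l by exact H1. cring.
Qed.

Lemma inv_exists a : is_fdiff a ->
  exists b, b 0%nat = RtoC 0 /\ fcomp a b = fid /\ fcomp b a = fid.
Proof.
  intros [H0 H1]. destruct (linv_spec a H0 H1) as [B0 [B1 Bl]].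
  destruct (linv_spec (linv a) B0 B1) as [C0 [C1 Cl]].
  exists (linv a). split; [exact B0|]. split; [|exact Bl].
  assert (E : linv (linv a) = a).
  { rewrite <- (fcomp_fid_r (linv (linv a))). rewrite <- Bl.
    rewrite <- fcomp_assoc by assumption. rewrite Cl. apply fcomp_fid_l. exact H0. }
  rewrite <- E at 1. exact Cl.
Qed.

Lemma finv_spec a : is_fdiff a ->
  finv a 0%nat = RtoC 0 /\ fcomp a (finv a) = fid /\ fcomp (finv a) a = fid.
Proof.
  intros Ha. unfold finv. apply epsilon_spec. apply inv_exists. exact Ha.
Qed.

Lemma finv_S a n : is_fdiff a -> finv a (S n) =
  Cmult (Cminus (fid (S n)) (sum_n (fun k => Cmult (finv a k) (fpow a k (S n))) n))
        (pow_n (Cinv (a 1%nat)) (S n)).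
Proof.
  intros Ha. destruct (finv_spec a Ha) as [_ [_ E]]. destruct Ha as [H0 H1].
  assert (E2 := f_equal (fun f => f (S n)) E). cbv beta in E2.
  unfold fcomp in E2. rewrite sum_Sn, fpow_diag in E2 by exact H0.
  rewrite <- E2.
  set (S0 := sum_n (fun k => Cmult (finv a k) (fpow a k (S n))) n).
  transitivity (Cmult (finv a (S n)) (Cmult (pow_n (a 1%nat) (S n)) (pow_n (Cinv (a 1%nat)) (S n)))).
  - rewrite Cmult_comm with (x := pow_n (a 1%nat) (S n)). rewrite pow_inv_l by exact H1. cring.
  - change (Cmult (finv a (S n)) (Cmult (pow_n (a 1%nat) (S n)) (pow_n (Cinv (a 1%nat)) (S n))) =
      Cmult (Cminus (Cplus S0 (Cmult (finv a (S n)) (pow_n (a 1%nat) (S n)))) S0) (pow_n (Cinv (a 1%nat)) (S n))). ring.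
Qed.

Lemma finv_1 a : is_fdiff a -> finv a 1%nat = Cinv (a 1%nat).
Proof.
  intros Ha. destruct (finv_spec a Ha) as [_ [_ E]]. destruct Ha as [H0 H1].
  assert (E2 := f_equal (fun f => f 1%nat) E). cbv beta in E2. rewrite fcomp_1 in E2.
  change (fid 1%nat) with (RtoC 1) in E2.
  transitivity (Cmult (Cmult (finv a 1%nat) (a 1%nat)) (Cinv (a 1%nat))).
  - field. exact H1.
  - rewrite E2. cring.
Qed.


Inductive ex := EC (c : C) | EV (j : nat) | EI | EA (e1 e2 : ex) | EM (e1 e2 : ex).

Fixpoint eval (e : ex) (x : fps) (y : C) : C :=
  match e with
  | EC c => c
  | EV j => x j
  | EI => y
  | EA e1 e2 => Cplus (eval e1 x y) (eval e2 x y)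
  | EM e1 e2 => Cmult (eval e1 x y) (eval e2 x y)
  end.

Fixpoint maxv (e : ex) : nat :=
  match e with
  | EC _ => 0%nat
  | EV j => j
  | EI => 1%nat
  | EA e1 e2 | EM e1 e2 => Nat.max (maxv e1) (maxv e2)
  end.

Lemma eval_agree e x x' y : (forall j, (j <= maxv e)%nat -> x j = x' j) -> eval e x y = eval e x' y.
Proof.
  induction e; simpl; intros H; try reflexivity.
  - apply H. lia.
  - rewrite IHe1, IHe2 by (intros; apply H; lia). reflexivity.
  - rewrite IHe1, IHe2 by (intros; apply H; lia). reflexivity.
Qed.

Definition Ex (F : fps -> C) := exists e, forall h, is_fdiff h -> F h = eval e h (Cinv (h 1%nat)).

Lemma Ex_ext F G : (forall h, is_fdiff h -> F h = G h) -> Ex G -> Ex F.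
Proof. intros H [e He]. exists e. intros h Hh. rewrite H by auto. auto. Qed.
Lemma Ex_const c : Ex (fun _ => c).
Proof. exists (EC c). reflexivity. Qed.
Lemma Ex_coord j : Ex (fun h => h j).
Proof. exists (EV j). reflexivity. Qed.
Lemma Ex_inv : Ex (fun h => Cinv (h 1%nat)).
Proof. exists EI. reflexivity. Qed.
Lemma Ex_plus F G : Ex F -> Ex G -> Ex (fun h => Cplus (F h) (G h)).
Proof. intros [e1 H1] [e2 H2]. exists (EA e1 e2). intros h Hh. simpl. rewrite H1, H2 by auto. reflexivity. Qed.
Lemma Ex_mult F G : Ex F -> Ex G -> Ex (fun h => Cmult (F h) (G h)).
Proof. intros [e1 H1] [e2 H2]. exists (EM e1 e2). intros h Hh. simpl. rewrite H1, H2 by auto. reflexivity. Qed.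
Lemma Ex_minus F G : Ex F -> Ex G -> Ex (fun h => Cminus (F h) (G h)).
Proof.
  intros H1 H2. apply (Ex_ext _ (fun h => Cplus (F h) (Cmult (RtoC (-1)) (G h)))).
  - intros. unfold Cminus. change (Copp (G h)) with (Copp (G h)). cring.
  - apply Ex_plus; auto. apply Ex_mult; auto. apply Ex_const.
Qed.
Lemma Ex_sum (F : nat -> fps -> C) n : (forall k, Ex (F k)) -> Ex (fun h => sum_n (fun k => F k h) n).
Proof.
  intros H. induction n.
  - apply (Ex_ext _ (F 0%nat)); [intros h _; rewrite sum_O; reflexivity | apply H].
  - apply (Ex_ext _ (fun h => Cplus (sum_n (fun k => F k h) n) (F (S n) h))).
    + intros h _. rewrite sum_Sn. reflexivity.
    + apply Ex_plus; auto.
Qed.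
Lemma Ex_sum_loc (F : nat -> fps -> C) n : (forall k, (k <= n)%nat -> Ex (F k)) -> Ex (fun h => sum_n (fun k => F k h) n).
Proof.
  intros H. apply (Ex_ext _ (fun h => sum_n (fun k => (fun k h => if le_dec k n then F k h else RtoC 0) k h) n)).
  - intros h _. apply sum_n_ext_loc. intros k Hk. destruct le_dec; [reflexivity|lia].
  - apply Ex_sum. intros k. destruct (le_dec k n).
    + apply H; auto.
    + apply Ex_const.
Qed.

Lemma Ex_pow F n : Ex F -> Ex (fun h => pow_n (F h) n).
Proof.
  intros H. induction n.
  - apply (Ex_ext _ (fun _ => RtoC 1)); [reflexivity|apply Ex_const].
  - apply (Ex_ext _ (fun h => Cmult (F h) (pow_n (F h) n))); [reflexivity|]. apply Ex_mult; auto.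
Qed.

Definition ExS (A : fps -> fps) := forall j, Ex (fun h => A h j).

Lemma ExS_fmul A B : ExS A -> ExS B -> ExS (fun h => fmul (A h) (B h)).
Proof.
  intros HA HB n. unfold fmul. apply (Ex_sum (fun k h => Cmult (A h k) (B h (n - k)%nat))).
  intros k. apply Ex_mult; auto.
Qed.
Lemma ExS_const a : ExS (fun _ => a).
Proof. intros j. apply Ex_const. Qed.
Lemma ExS_fpow B k : ExS B -> ExS (fun h => fpow (B h) k).
Proof.
  intros HB. induction k.
  - exact (ExS_const fone).
  - apply (ExS_fmul B (fun h => fpow (B h) k)); auto.
Qed.
Lemma ExS_fcomp A B : ExS A -> ExS B -> ExS (fun h => fcomp (A h) (B h)).
Proof.
  intros HA HB n. unfold fcomp. apply (Ex_sum (fun k h => Cmult (A h k) (fpow (B h) k n))).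
  intros k. apply Ex_mult; auto. apply (ExS_fpow B k HB).
Qed.

Lemma ExS_finv X : ExS X -> (forall h, is_fdiff h -> is_fdiff (X h)) ->
  Ex (fun h => Cinv (X h 1%nat)) -> ExS (fun h => finv (X h)).
Proof.
  intros HX HF HI.
  assert (forall n k, (k <= n)%nat -> Ex (fun h => finv (X h) k)).
  { induction n; intros k Hk.
    - replace k with 0%nat by lia. apply (Ex_ext _ (fun _ => RtoC 0)); [|apply Ex_const].
      intros h Hh. apply (finv_spec _ (HF h Hh)).
    - destruct (Nat.eq_dec k (S n)) as [->|Hne]; [|apply IHn; lia].
      apply (Ex_ext _ (fun h => Cmult (Cminus (fid (S n)) (sum_n (fun k => Cmult (finv (X h) k) (fpow (X h) k (S n))) n))
        (pow_n (Cinv (X h 1%nat)) (S n)))).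
      + intros h Hh. apply finv_S. auto.
      + apply Ex_mult; [|apply Ex_pow; auto]. apply Ex_minus; [apply Ex_const|].
        apply (Ex_sum_loc (fun k h => Cmult (finv (X h) k) (fpow (X h) k (S n)))). intros k' Hk'.
        apply Ex_mult; [apply IHn; auto|]. apply (ExS_fpow X k' HX). }
  intros j. apply (H j j). lia.
Qed.


Lemma ExS_id : ExS (fun h => h).
Proof. intros j. apply Ex_coord. Qed.

Lemma conj_fdiff h g : is_fdiff h -> is_fdiff g -> is_fdiff (fconj h g) /\ fconj h g 1%nat = g 1%nat.
Proof.
  intros Hh Hg. unfold fconj.
  assert (E1 : fcomp (finv h) (fcomp g h) 1%nat = g 1%nat).
  { rewrite !fcomp_1. rewrite finv_1 by auto. field. apply Hh. }
  repeat split.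
  - rewrite fcomp_0. apply (finv_spec h Hh).
  - rewrite E1. apply Hg.
  - exact E1.
Qed.

Lemma rep (f g : fps) w : is_fdiff g -> ExS (fun h => weval w f (fconj h g)).
Proof.
  intros Hg.
  assert (Hfi : ExS (fun h => finv h)) by exact (ExS_finv (fun h => h) ExS_id (fun h H => H) Ex_inv).
  assert (Hc : ExS (fun h => fconj h g)).
  { unfold fconj. apply (ExS_fcomp (fun h => finv h) (fun h => fcomp g h)); auto.
    apply (ExS_fcomp (fun _ => g) (fun h => h)); [apply ExS_const | apply ExS_id]. }
  assert (Hci : ExS (fun h => finv (fconj h g))).
  { apply (ExS_finv (fun h => fconj h g)); auto.
    - intros h Hh. apply conj_fdiff; auto.
    - apply (Ex_ext _ (fun _ => Cinv (g 1%nat))); [|apply Ex_const].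
      intros h Hh. rewrite (proj2 (conj_fdiff h g Hh Hg)). reflexivity. }
  induction w as [|x w IH].
  - exact (ExS_const fid).
  - change (ExS (fun h => fcomp (lval f (fconj h g) x) (weval w f (fconj h g)))).
    apply (ExS_fcomp (fun h => lval f (fconj h g) x)); auto.
    destruct x; simpl; auto; apply ExS_const.
Qed.


Inductive cpoly : (R -> C) -> Prop :=
| poly_c (c : C) : cpoly (fun _ => c)
| poly_x (c : C) (p : R -> C) : cpoly p -> cpoly (fun t => Cplus c (Cmult (RtoC t) (p t))).

Lemma poly_ext p q : cpoly p -> (forall t, p t = q t) -> cpoly q.
Proof. intros H E. replace q with p; auto. apply functional_extensionality. auto. Qed.

Lemma poly_tx p : cpoly p -> cpoly (fun t => Cmult (RtoC t) (p t)).
Proof. intros H. apply (poly_ext _ _ (poly_x 0 p H)). intros t. cring. Qed.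

Lemma poly_scal c p : cpoly p -> cpoly (fun t => Cmult c (p t)).
Proof.
  induction 1.
  - apply poly_c.
  - apply (poly_ext _ _ (poly_x (Cmult c c0) _ IHcpoly)). intros t. cring.
Qed.

Lemma poly_add p q : cpoly p -> cpoly q -> cpoly (fun t => Cplus (p t) (q t)).
Proof.
  intros Hp. revert q. induction Hp as [c|c p Hp IH]; intros q Hq.
  - destruct Hq as [d|d q Hq].
    + apply poly_c.
    + apply (poly_ext _ _ (poly_x (Cplus c d) q Hq)). intros t. cring.
  - destruct Hq as [d|d q Hq].
    + apply (poly_ext _ _ (poly_x (Cplus c d) p Hp)). intros t. cring.
    + apply (poly_ext _ _ (poly_x (Cplus c d) _ (IH q Hq))). intros t. cring.
Qed.

Lemma poly_mul p q : cpoly p -> cpoly q -> cpoly (fun t => Cmult (p t) (q t)).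
Proof.
  intros Hp. revert q. induction Hp as [c|c p Hp IH]; intros q Hq.
  - apply poly_scal; auto.
  - apply (poly_ext _ _ (poly_add _ _ (poly_scal c q Hq) (poly_tx _ (IH q Hq)))). intros t. cring.
Qed.

Lemma poly_pow p n : cpoly p -> cpoly (fun t => pow_n (p t) n).
Proof.
  intros H. induction n.
  - apply (poly_c 1).
  - apply (poly_mul p (fun t => pow_n (p t) n)); auto.
Qed.

Lemma poly_bounded p : cpoly p -> exists B, 0 <= B /\ forall t, 0 <= t <= 1 -> Cmod (p t) <= B.
Proof.
  induction 1 as [c|c p Hp IH].
  - exists (Cmod c). split; [apply Cmod_ge_0|]. intros; lra.
  - destruct IH as [B [HB0 HB]]. exists (Cmod c + B). split.
    + pose proof (Cmod_ge_0 c). lra.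
    + intros t Ht. eapply Rle_trans; [apply Cmod_triangle|]. rewrite Cmod_mult, Cmod_R.
      rewrite Rabs_pos_eq by lra. pose proof (HB t Ht). pose proof (Cmod_ge_0 (p t)). nra.
Qed.

Lemma Cmod_rev (c z : C) : Cmod c - Cmod z <= Cmod (Cplus c z).
Proof.
  pose proof (Cmod_triangle (Cplus c z) (Copp z)). rewrite Cmod_opp in H.
  replace (Cplus (Cplus c z) (Copp z)) with c in H by cring. lra.
Qed.

Lemma poly_nonzero_near0 p : cpoly p -> (exists s, p s <> RtoC 0) ->
  forall tau, 0 < tau -> exists t, 0 < t < tau /\ p t <> RtoC 0.
Proof.
  induction 1 as [c|c p Hp IH]; intros [s Hs] tau Htau.
  - exists (tau / 2). split; [lra|exact Hs].
  - destruct (Ceq_dec c 0) as [Hc|Hc].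
    + subst c. assert (Hps : p s <> RtoC 0).
      { intro E. apply Hs. rewrite E. cring. }
      destruct (IH (ex_intro _ s Hps) tau Htau) as [t [Ht Hpt]].
      exists t. split; auto. intro E.
      assert (E2 : Cmult (RtoC t) (p t) = RtoC 0).
      { rewrite <- E. cring. }
      revert E2. apply Cmult_neq_0; auto. intro E3. injection E3. intros. lra.
    + destruct (poly_bounded p Hp) as [B [HB0 HB]].
      assert (Hcm : 0 < Cmod c) by (apply Cmod_gt_0; auto).
      set (t := Rmin (tau/2) (Rmin (1/2) (Cmod c / (2 * (B + 1))))).
      assert (Ht1 : 0 < t).
      { unfold t. repeat apply Rmin_glb_lt; try lra. apply Rdiv_lt_0_compat; lra. }
      assert (Ht2 : t <= tau/2) by apply Rmin_l.
      assert (Ht3 : t <= 1/2) by (eapply Rle_trans; [apply Rmin_r|apply Rmin_l]).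
      assert (Ht4 : t <= Cmod c / (2 * (B + 1))) by (eapply Rle_trans; [apply Rmin_r|apply Rmin_r]).
      exists t. split; [lra|]. intro E.
      pose proof (Cmod_rev c (Cmult (RtoC t) (p t))) as HR. rewrite E, Cmod_0 in HR.
      rewrite Cmod_mult, Cmod_R, Rabs_pos_eq in HR by lra.
      pose proof (HB t ltac:(lra)).
      assert (t * B < Cmod c).
      { apply Rle_lt_trans with (Cmod c / (2 * (B + 1)) * B).
        - apply Rmult_le_compat_r; lra.
        - apply Rlt_le_trans with (Cmod c / 2). 
          + unfold Rdiv. rewrite Rinv_mult. 
            assert (0 < / (B+1)) by (apply Rinv_0_lt_compat; lra).
            assert (B * / (B+1) < 1).
            { apply Rmult_lt_reg_r with (B + 1); [lra|]. rewrite Rmult_assoc, Rinv_l by lra. lra. }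
            pose proof (Rinv_0_lt_compat 2 ltac:(lra)). nra.
          + lra. }
      pose proof (Cmod_ge_0 (p t)). nra.
Qed.


Definition kt (g0 p : fps) (t : R) : fps := fun j => Cplus (g0 j) (Cmult (RtoC t) (p j)).

Lemma pow0C (x : C) : pow_n x 0 = RtoC 1.
Proof. reflexivity. Qed.

Lemma poly_kt (g0 p : fps) (j : nat) : cpoly (fun t => kt g0 p t j).
Proof. exact (poly_x (g0 j) (fun _ => p j) (poly_c (p j))). Qed.

Lemma path_poly (g0 p : fps) (e : ex) : exists m psi, cpoly psi /\ forall t, kt g0 p t 1%nat <> RtoC 0 ->
  Cmult (eval e (kt g0 p t) (Cinv (kt g0 p t 1%nat))) (pow_n (kt g0 p t 1%nat) m) = psi t.
Proof.
  induction e as [c|j| |e1 IH1 e2 IH2|e1 IH1 e2 IH2].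
  - exists 0%nat, (fun _ => c). split; [apply poly_c|]. intros t _. simpl. change (@one C_Ring) with (RtoC 1). cring.
  - exists 0%nat, (fun t => kt g0 p t j). split; [apply poly_kt|]. intros t _. simpl. change (@one C_Ring) with (RtoC 1). cring.
  - exists 1%nat, (fun _ => RtoC 1). split; [apply poly_c|]. intros t H. simpl.
    change (Cmult (Cinv (kt g0 p t 1%nat)) (Cmult (kt g0 p t 1%nat) 1) = 1). field. exact H.
  - destruct IH1 as [m1 [p1 [P1 H1]]]. destruct IH2 as [m2 [p2 [P2 H2]]].
    exists (m1 + m2)%nat, (fun t => Cplus (Cmult (p1 t) (pow_n (kt g0 p t 1%nat) m2)) (Cmult (p2 t) (pow_n (kt g0 p t 1%nat) m1))).
    split.
    + apply poly_add; apply poly_mul; auto; apply poly_pow; apply poly_kt.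
    + intros t Ht. rewrite <- H1, <- H2 by auto. simpl. rewrite pow_n_plus.
      change (Cmult (Cplus (eval e1 (kt g0 p t) (Cinv (kt g0 p t 1%nat))) (eval e2 (kt g0 p t) (Cinv (kt g0 p t 1%nat))))
        (Cmult (pow_n (kt g0 p t 1%nat) m1) (pow_n (kt g0 p t 1%nat) m2)) =
        Cplus (Cmult (Cmult (eval e1 (kt g0 p t) (Cinv (kt g0 p t 1%nat))) (pow_n (kt g0 p t 1%nat) m1)) (pow_n (kt g0 p t 1%nat) m2))
          (Cmult (Cmult (eval e2 (kt g0 p t) (Cinv (kt g0 p t 1%nat))) (pow_n (kt g0 p t 1%nat) m2)) (pow_n (kt g0 p t 1%nat) m1))).
      ring.
  - destruct IH1 as [m1 [p1 [P1 H1]]]. destruct IH2 as [m2 [p2 [P2 H2]]].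
    exists (m1 + m2)%nat, (fun t => Cmult (p1 t) (p2 t)).
    split; [apply poly_mul; auto|].
    intros t Ht. rewrite <- H1, <- H2 by auto. simpl. rewrite pow_n_plus.
    change (Cmult (Cmult (eval e1 (kt g0 p t) (Cinv (kt g0 p t 1%nat))) (eval e2 (kt g0 p t) (Cinv (kt g0 p t 1%nat))))
        (Cmult (pow_n (kt g0 p t 1%nat) m1) (pow_n (kt g0 p t 1%nat) m2)) =
        Cmult (Cmult (eval e1 (kt g0 p t) (Cinv (kt g0 p t 1%nat))) (pow_n (kt g0 p t 1%nat) m1))
          (Cmult (eval e2 (kt g0 p t) (Cinv (kt g0 p t 1%nat))) (pow_n (kt g0 p t 1%nat) m2))).
    ring.
Qed.


Lemma plus_cont (a b : C) eps : 0 < eps -> exists eta, 0 < eta /\ forall a' b',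
  Cmod (Cminus a' a) < eta -> Cmod (Cminus b' b) < eta -> Cmod (Cminus (Cplus a' b') (Cplus a b)) < eps.
Proof.
  intros He. exists (eps/2). split; [lra|]. intros a' b' H1 H2.
  replace (Cminus (Cplus a' b') (Cplus a b)) with (Cplus (Cminus a' a) (Cminus b' b)) by cring.
  eapply Rle_lt_trans; [apply Cmod_triangle|]. lra.
Qed.

Lemma mult_cont (a b : C) eps : 0 < eps -> exists eta, 0 < eta /\ forall a' b',
  Cmod (Cminus a' a) < eta -> Cmod (Cminus b' b) < eta -> Cmod (Cminus (Cmult a' b') (Cmult a b)) < eps.
Proof.
  intros He. pose proof (Cmod_ge_0 a) as Ha. pose proof (Cmod_ge_0 b) as Hb.
  set (d := Rmin 1 (eps / (2 * (Cmod a + Cmod b + 1)))).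
  assert (Hd0 : 0 < d) by (apply Rmin_glb_lt; [lra|]; apply Rdiv_lt_0_compat; lra).
  assert (Hd1 : d <= 1) by apply Rmin_l.
  assert (Hd2 : d * (2 * (Cmod a + Cmod b + 1)) <= eps).
  { assert (d <= eps / (2 * (Cmod a + Cmod b + 1))) by apply Rmin_r.
    apply Rmult_le_compat_r with (r := 2 * (Cmod a + Cmod b + 1)) in H; [|lra].
    unfold Rdiv in H. rewrite Rmult_assoc, Rinv_l in H by lra. lra. }
  exists d. split; [exact Hd0|]. intros a' b' H1 H2.
  replace (Cminus (Cmult a' b') (Cmult a b)) with
    (Cplus (Cmult (Cminus a' a) (Cminus b' b)) (Cplus (Cmult a (Cminus b' b)) (Cmult (Cminus a' a) b))) by cring.
  eapply Rle_lt_trans; [apply Cmod_triangle|].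
  eapply Rle_lt_trans; [apply Rplus_le_compat_l; apply Cmod_triangle|].
  rewrite !Cmod_mult.
  pose proof (Cmod_ge_0 (Cminus a' a)). pose proof (Cmod_ge_0 (Cminus b' b)).
  assert (Cmod (Cminus a' a) * Cmod (Cminus b' b) <= d * d) by (apply Rmult_le_compat; lra).
  assert (Cmod a * Cmod (Cminus b' b) <= Cmod a * d) by (apply Rmult_le_compat_l; lra).
  assert (Cmod (Cminus a' a) * Cmod b <= d * Cmod b) by (apply Rmult_le_compat_r; lra).
  assert (d * d <= d) by nra.
  assert (Cmod a * d + d * Cmod b + d < d * (2 * (Cmod a + Cmod b + 1))) by nra.
  nra.
Qed.

Lemma inv_cont (z : C) eps : z <> RtoC 0 -> 0 < eps -> exists eta, 0 < eta /\ forall z',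
  Cmod (Cminus z' z) < eta -> Cmod (Cminus (Cinv z') (Cinv z)) < eps.
Proof.
  intros Hz He. assert (Hm : 0 < Cmod z) by (apply Cmod_gt_0; auto).
  set (d := Rmin (Cmod z / 2) (eps * (Cmod z * Cmod z) / 2)).
  assert (Hd0 : 0 < d) by (apply Rmin_glb_lt; [lra|]; apply Rdiv_lt_0_compat; [|lra]; apply Rmult_lt_0_compat; nra).
  assert (Hd1 : d <= Cmod z / 2) by apply Rmin_l.
  assert (Hd2 : d <= eps * (Cmod z * Cmod z) / 2) by apply Rmin_r.
  exists d. split; [exact Hd0|]. intros z' H.
  assert (Hz' : Cmod z / 2 <= Cmod z').
  { pose proof (Cmod_triangle z' (Cminus z z')). replace (Cplus z' (Cminus z z')) with z in H0 by cring.
    replace (Cminus z z') with (Copp (Cminus z' z)) in H0 by cring. rewrite Cmod_opp in H0. lra. }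
  assert (Hz'0 : z' <> RtoC 0) by (apply Cmod_gt_0; lra).
  replace (Cminus (Cinv z') (Cinv z)) with (Cmult (Copp (Cminus z' z)) (Cinv (Cmult z' z))) by (field; auto).
  rewrite Cmod_mult, Cmod_opp, Cmod_inv, Cmod_mult by (apply Cmult_neq_0; auto).
  assert (0 < Cmod z' * Cmod z) by nra.
  apply Rmult_lt_reg_r with (Cmod z' * Cmod z); [auto|].
  rewrite Rmult_assoc, Rinv_l by lra. rewrite Rmult_1_r.
  assert (Cmod z * Cmod z / 2 <= Cmod z' * Cmod z) by nra.
  nra.
Qed.

Lemma eval_cont e x y eps : 0 < eps -> exists eta, 0 < eta /\ forall x' y',
  (forall j, (j <= maxv e)%nat -> Cmod (Cminus (x' j) (x j)) < eta) -> Cmod (Cminus y' y) < eta ->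
  Cmod (Cminus (eval e x' y') (eval e x y)) < eps.
Proof.
  revert eps. induction e as [c|j| |e1 IH1 e2 IH2|e1 IH1 e2 IH2]; intros eps He; simpl.
  - exists 1. split; [lra|]. intros. replace (Cminus c c) with (RtoC 0) by cring. rewrite Cmod_0. lra.
  - exists eps. split; [lra|]. intros x' y' H _. apply H. lia.
  - exists eps. split; [lra|]. intros x' y' _ H. exact H.
  - destruct (plus_cont (eval e1 x y) (eval e2 x y) eps He) as [d [Hd Hc]].
    destruct (IH1 d Hd) as [d1 [Hd1 H1]]. destruct (IH2 d Hd) as [d2 [Hd2 H2]].
    exists (Rmin d1 d2). split; [apply Rmin_glb_lt; auto|]. intros x' y' Hx Hy.
    pose proof (Rmin_l d1 d2). pose proof (Rmin_r d1 d2).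
    apply Hc; [apply H1 | apply H2]; try (intros j Hj; specialize (Hx j ltac:(lia))); lra.
  - destruct (mult_cont (eval e1 x y) (eval e2 x y) eps He) as [d [Hd Hc]].
    destruct (IH1 d Hd) as [d1 [Hd1 H1]]. destruct (IH2 d Hd) as [d2 [Hd2 H2]].
    exists (Rmin d1 d2). split; [apply Rmin_glb_lt; auto|]. intros x' y' Hx Hy.
    pose proof (Rmin_l d1 d2). pose proof (Rmin_r d1 d2).
    apply Hc; [apply H1 | apply H2]; try (intros j Hj; specialize (Hx j ltac:(lia))); lra.
Qed.


Lemma Cseries_unique (a : nat -> C) l1 l2 : is_series a l1 -> is_series a l2 -> l1 = l2.
Proof. intros H1 H2. exact (filterlim_locally_unique _ _ _ H1 H2). Qed.

Lemma Cseries_bound (a : nat -> C) l B : is_series a l -> (forall n, Cmod (sum_n a n) <= B) -> Cmod l <= B.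
Proof.
  intros H HB.
  assert (L : is_lim_seq (fun n => Cmod (sum_n a n)) (Cmod l)).
  { unfold is_lim_seq. change (filterlim (fun n => norm (sum_n a n)) eventually (locally (norm l))).
    eapply filterlim_comp; [exact H|]. apply filterlim_norm. }
  pose proof (is_lim_seq_le _ _ _ _ HB L (is_lim_seq_const B)). simpl in H0. exact H0.
Qed.

Lemma Cmod_sum (u : nat -> C) n : Cmod (sum_n u n) <= sum_n (fun k => Cmod (u k)) n.
Proof.
  induction n.
  - rewrite !sum_O. lra.
  - rewrite !sum_Sn. eapply Rle_trans; [apply Cmod_triangle|]. change (plus ?x ?y) with (x + y). lra.
Qed.

Lemma Rsum_le (u v : nat -> R) n : (forall k, (k <= n)%nat -> u k <= v k) -> sum_n u n <= sum_n v n.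
Proof.
  induction n; intros H.
  - rewrite !sum_O. apply H. lia.
  - rewrite !sum_Sn. change (plus ?x ?y) with (x + y). pose proof (H (S n) ltac:(lia)).
    pose proof (IHn ltac:(intros; apply H; lia)). lra.
Qed.

Lemma Rsum_const c n : sum_n (fun _ => c) n = INR (S n) * c.
Proof. apply sum_n_const. Qed.

Lemma finite_series (a : nat -> C) N : (forall l, (N < l)%nat -> a l = RtoC 0) -> is_series a (sum_n a N).
Proof.
  intros H. unfold is_series.
  apply (filterlim_ext_loc (fun _ => sum_n a N)).
  - exists N. intros n Hn. symmetry. apply sum_extend; auto. intros k Hk. apply H. lia.
  - apply filterlim_const.
Qed.

Lemma series_sum (a : nat -> nat -> C) (L : nat -> C) N :
  (forall s, (s <= N)%nat -> is_series (a s) (L s)) ->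
  is_series (fun l => sum_n (fun s => a s l) N) (sum_n L N).
Proof.
  induction N; intros H.
  - rewrite sum_O. apply (is_series_ext (a 0%nat)); [intros; rewrite sum_O; reflexivity|]. apply H. lia.
  - rewrite sum_Sn. apply (is_series_ext (fun l => plus (sum_n (fun s => a s l) N) (a (S N) l))).
    + intros. rewrite sum_Sn. reflexivity.
    + apply (@is_series_plus C_AbsRing C_NormedModule); [apply IHN; intros; apply H; lia | apply H; lia].
Qed.

Lemma terms_bounded (a : nat -> C) l : is_series a l -> exists K, 0 <= K /\ forall n, Cmod (a n) <= K.
Proof.
  intros H. unfold is_series in H. pose proof (proj1 (filterlim_locally (sum_n a) l) H (mkposreal 1 Rlt_0_1)) as H'.
  clear H. rename H' into H.
  destruct H as [N HN]. simpl in HN.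
  exists (3 + sum_n (fun k => Cmod (a k)) N). split.
  - assert (0 <= sum_n (fun k => Cmod (a k)) N).
    { apply Rle_trans with (sum_n (fun _ => 0) N). rewrite Rsum_const. lra. apply Rsum_le. intros. apply Cmod_ge_0. }
    lra.
  - intros n. assert (P : 0 <= sum_n (fun k => Cmod (a k)) N).
    { apply Rle_trans with (sum_n (fun _ => 0) N). rewrite Rsum_const. lra. apply Rsum_le. intros. apply Cmod_ge_0. }
    destruct (le_lt_dec n N) as [Hn|Hn].
    + assert (forall m, (n <= m)%nat -> Cmod (a n) <= sum_n (fun k => Cmod (a k)) m).
      { induction m; intros Hm.
        - replace n with 0%nat by lia. rewrite sum_O. lra.
        - destruct (Nat.eq_dec n (S m)) as [->|Hne].
          + rewrite sum_Sn. change (plus ?x ?y) with (x + y).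
            assert (0 <= sum_n (fun k => Cmod (a k)) m).
            { apply Rle_trans with (sum_n (fun _ => 0) m). rewrite Rsum_const. lra. apply Rsum_le. intros. apply Cmod_ge_0. }
            lra.
          + rewrite sum_Sn. change (plus ?x ?y) with (x + y). pose proof (Cmod_ge_0 (a (S m))). pose proof (IHm ltac:(lia)). lra. }
      specialize (H N Hn). lra.
    + destruct n as [|n]; [lia|].
      pose proof (HN (S n) ltac:(lia)) as H1. pose proof (HN n ltac:(lia)) as H2.
      pose proof (C_NormedModule_mixin_compat2 l _ (mkposreal 1 Rlt_0_1) H1) as H1'.
      pose proof (C_NormedModule_mixin_compat2 l _ (mkposreal 1 Rlt_0_1) H2) as H2'. clear H1 H2.
      rename H1' into H1. rename H2' into H2. rewrite Rmult_1_r in H1, H2.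
      simpl in H1, H2. rewrite sum_Sn in H1.
      replace (a (S n)) with (Cminus (minus (plus (sum_n a n) (a (S n))) l) (minus (sum_n a n) l)).
      2: { change (minus ?x ?y) with (Cminus x y). change (plus ?x ?y) with (Cplus x y). cring. }
      unfold Cminus. eapply Rle_trans; [apply Cmod_triangle|]. rewrite Cmod_opp.
      assert (sqrt 2 < 1.5).
      { rewrite <- (sqrt_pow2 1.5) by lra. apply sqrt_lt_1; lra. }
      match goal with |- ?x + ?y <= _ => assert (x < 1.5) by (eapply Rlt_trans; [exact H1|exact H]);
        assert (y < 1.5) by (eapply Rlt_trans; [exact H2|exact H]) end.
      lra.
Qed.


Definition zeta (t : R) : C := (cos t, sin t).

Lemma zeta_mult a b : Cmult (zeta a) (zeta b) = zeta (a + b).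
Proof. unfold zeta, Cmult. simpl. rewrite cos_plus, sin_plus. f_equal; ring. Qed.

Lemma zeta_pow t s : pow_n (zeta t) s = zeta (INR s * t).
Proof.
  induction s.
  - simpl. unfold zeta. rewrite Rmult_0_l, cos_0, sin_0. reflexivity.
  - change (pow_n (zeta t) (S s)) with (Cmult (zeta t) (pow_n (zeta t) s)).
    rewrite IHs, zeta_mult, S_INR. f_equal. ring.
Qed.

Lemma Cmod_zeta t : Cmod (zeta t) = 1.
Proof.
  unfold Cmod, zeta. simpl. replace (cos t * (cos t * 1) + sin t * (sin t * 1)) with 1.
  - apply sqrt_1.
  - pose proof (sin2_cos2 t). unfold Rsqr in H. lra.
Qed.

Lemma zeta_period k : zeta (INR k * (2 * PI)) = RtoC 1.
Proof.
  unfold zeta. replace (INR k * (2 * PI)) with (0 + 2 * INR k * PI) by ring.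
  rewrite cos_period, sin_period, cos_0, sin_0. reflexivity.
Qed.

Lemma zeta_neg t : zeta t = RtoC 1 -> zeta (- t) = RtoC 1.
Proof.
  unfold zeta. intros H. injection H. intros H1 H2. rewrite cos_neg, sin_neg, H1, H2.
  unfold RtoC. f_equal. ring.
Qed.

Lemma zeta_neq1 t : 0 < t < 2 * PI -> zeta t <> RtoC 1.
Proof.
  intros Ht H. unfold zeta in H. injection H. intros H1 H2.
  destruct (sin_eq_O_2PI_0 t ltac:(lra) ltac:(lra) H1) as [E|[E|E]]; try lra.
  rewrite E, cos_PI in H2. lra.
Qed.

Lemma geom (u : C) m : Cmult (sum_n (fun s => pow_n u s) m) (Cminus u 1) = Cminus (pow_n u (S m)) 1.
Proof.
  induction m.
  - rewrite sum_O. change (pow_n u 0) with (RtoC 1). change (pow_n u 1) with (Cmult u 1). cring.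
  - rewrite sum_Sn. change (plus ?x ?y) with (Cplus x y).
    change (pow_n u (S (S m))) with (Cmult u (pow_n u (S m))).
    change (pow_n u (S m)) with (Cmult u (pow_n u m)) in *.
    transitivity (Cplus (Cmult (sum_n (fun s => pow_n u s) m) (Cminus u 1)) (Cmult (Cmult u (pow_n u m)) (Cminus u 1))); [cring|].
    rewrite IHm. cring.
Qed.

Definition Vsum (d : R) (m' : nat) : C := sum_n (fun s => zeta (INR s * (2 * PI * d / INR (S m')))) m'.

Lemma Vsum_0 m' : Vsum 0 m' = RtoC (INR (S m')).
Proof.
  unfold Vsum. transitivity (sum_n (fun _ => RtoC 1) m').
  - apply sum_n_ext. intros s. replace (INR s * (2 * PI * 0 / INR (S m'))) with 0 by (unfold Rdiv; ring).
    unfold zeta. rewrite cos_0, sin_0. reflexivity.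
  - induction m'.
    + rewrite sum_O. reflexivity.
    + rewrite sum_Sn, IHm'. change (plus ?x ?y) with (Cplus x y). rewrite (S_INR (S m')).
      unfold RtoC, Cplus. simpl. f_equal; ring.
Qed.

Lemma Vsum_zero (k : nat) m' : (0 < k < S m')%nat -> forall d, (d = INR k \/ d = - INR k) -> Vsum d m' = RtoC 0.
Proof.
  intros Hk d Hd. set (m := INR (S m')). assert (Hm : 0 < m) by (unfold m; apply lt_0_INR; lia).
  set (u := zeta (2 * PI * d / m)).
  assert (E : Vsum d m' = sum_n (fun s => pow_n u s) m').
  { unfold Vsum. apply sum_n_ext. intros s. unfold u. rewrite zeta_pow. f_equal. }
  assert (Um : pow_n u (S m') = RtoC 1).
  { unfold u. rewrite zeta_pow. fold m.
    destruct Hd as [-> | ->].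
    - replace (m * (2 * PI * INR k / m)) with (INR k * (2 * PI)) by (field; lra). apply zeta_period.
    - replace (m * (2 * PI * - INR k / m)) with (- (INR k * (2 * PI))) by (field; lra).
      apply zeta_neg. apply zeta_period. }
  assert (U1 : u <> RtoC 1).
  { assert (Hk1 : 0 < INR k) by (apply lt_0_INR; lia).
    assert (Hk2 : INR k < m) by (unfold m; apply lt_INR; lia).
    assert (0 < 2 * PI * INR k / m < 2 * PI).
    { pose proof PI_RGT_0. split.
      - apply Rdiv_lt_0_compat; nra.
      - apply Rmult_lt_reg_r with m; auto. unfold Rdiv. rewrite Rmult_assoc, Rinv_l by lra. nra. }
    unfold u. destruct Hd as [-> | ->].
    - apply zeta_neq1; auto.
    - intro H'. apply zeta_neg in H'. revert H'. replace (- (2 * PI * - INR k / m)) with (2 * PI * INR k / m) by (field; lra).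
      apply zeta_neq1; auto. }
  rewrite E. pose proof (geom u m') as G. rewrite Um in G.
  replace (Cminus 1 1) with (RtoC 0) in G by cring.
  destruct (Ceq_dec (sum_n (fun s => pow_n u s) m') 0) as [Z|Z]; auto.
  exfalso. revert G. apply Cmult_neq_0; auto. intro E'. apply U1.
  transitivity (Cplus (Cminus u 1) 1); [cring|]. rewrite E'. cring.
Qed.

Lemma Vsum_bound d m' : Cmod (Vsum d m') <= INR (S m').
Proof.
  unfold Vsum. eapply Rle_trans; [apply Cmod_sum|].
  rewrite <- (Rmult_1_r (INR (S m'))), <- Rsum_const. apply Rsum_le. intros. rewrite Cmod_zeta. lra.
Qed.


Lemma pow_n_RtoC x n : pow_n (RtoC x) n = RtoC (x ^ n).
Proof.
  induction n.
  - reflexivity.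
  - change (pow_n (RtoC x) (S n)) with (Cmult (RtoC x) (pow_n (RtoC x) n)). rewrite IHn.
    simpl. unfold RtoC, Cmult. simpl. f_equal; ring.
Qed.

Lemma pow_n_Cmult (a b : C) n : pow_n (Cmult a b) n = Cmult (pow_n a n) (pow_n b n).
Proof.
  induction n.
  - change (RtoC 1 = Cmult 1 1). cring.
  - change (Cmult (Cmult a b) (pow_n (Cmult a b) n) = Cmult (Cmult a (pow_n a n)) (Cmult b (pow_n b n))).
    rewrite IHn. cring.
Qed.

Lemma geom_tail K q N n : 0 <= q < 1 ->
  sum_n (fun l => if lt_dec l N then 0 else K * q ^ l) n =
  if lt_dec n N then 0 else K * (q ^ N - q ^ (S n)) / (1 - q).
Proof.
  intros Hq. induction n.
  - rewrite sum_O. destruct (lt_dec 0 N); [reflexivity|]. replace N with 0%nat by lia. simpl. field. lra.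
  - rewrite sum_Sn. change (plus ?x ?y) with (x + y). rewrite IHn.
    destruct (lt_dec (S n) N), (lt_dec n N); try lia.
    + lra.
    + replace N with (S n) by lia. simpl. field. lra.
    + simpl. field. lra.
Qed.

Lemma geom_tail_le K q N n : 0 <= K -> 0 <= q < 1 ->
  sum_n (fun l => if lt_dec l N then 0 else K * q ^ l) n <= K * q ^ N / (1 - q).
Proof.
  intros HK Hq. rewrite geom_tail by auto. destruct lt_dec.
  - apply Rmult_le_pos; [apply Rmult_le_pos; [auto|apply pow_le; lra]|]. apply Rlt_le, Rinv_0_lt_compat; lra.
  - unfold Rdiv. apply Rmult_le_compat_r; [apply Rlt_le, Rinv_0_lt_compat; lra|].
    apply Rmult_le_compat_l; auto. pose proof (pow_le q (S n) ltac:(lra)). lra.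
Qed.


Lemma Cmod_RtoC_pos x : 0 <= x -> Cmod (RtoC x) = x.
Proof. intros. rewrite Cmod_R. apply Rabs_pos_eq. auto. Qed.

Lemma key_claim (c : fps) r M K j m' :
  0 < r -> 0 <= K -> (j <= m')%nat ->
  (forall z l, Cmod z < r -> is_series (fun n => Cmult (c n) (pow_n z n)) l -> Cmod l <= M) ->
  (forall z, Cmod z < r -> exists l, is_series (fun n => Cmult (c n) (pow_n z n)) l) ->
  (forall n, Cmod (c n) * (r/2)^n <= K * (2/3)^n) ->
  Cmod (c j) * (r/2)^j <= M + K * (2/3)^(j + S m') / (1 - 2/3).
Proof.
  intros Hr HK Hj HB Hext Hc.
  set (rho := r / 2). set (m := INR (S m')).
  assert (Hm : 0 < m) by (unfold m; apply lt_0_INR; lia).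
  assert (Hrho : 0 < rho) by (unfold rho; lra).
  set (z := fun s : nat => Cmult (RtoC rho) (zeta (INR s * (2 * PI / m)))).
  assert (Hz : forall s, Cmod (z s) < r).
  { intros s. unfold z. rewrite Cmod_mult, Cmod_zeta, Cmod_RtoC_pos by lra. unfold rho. lra. }
  set (F := fun s => epsilon (inhabits (RtoC 0)) (fun l => is_series (fun n => Cmult (c n) (pow_n (z s) n)) l)).
  assert (HF : forall s, is_series (fun n => Cmult (c n) (pow_n (z s) n)) (F s)).
  { intros s. unfold F. apply epsilon_spec. apply Hext. apply Hz. }
  set (w := fun s : nat => Cmult (RtoC (/ m)) (zeta (- INR s * (2 * PI * INR j / m)))).
  set (A := sum_n (fun s => Cmult (w s) (F s)) m').
  assert (HA : is_series (fun l => sum_n (fun s => Cmult (w s) (Cmult (c l) (pow_n (z s) l))) m') A).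
  { apply series_sum. intros s _. apply (@is_series_scal C_AbsRing C_NormedModule). apply HF. }
  assert (HAb : Cmod A <= M).
  { unfold A. eapply Rle_trans; [apply Cmod_sum|].
    apply Rle_trans with (sum_n (fun _ => / m * M) m').
    - apply Rsum_le. intros s _. unfold w. rewrite !Cmod_mult, Cmod_zeta, Cmod_RtoC_pos.
      + rewrite Rmult_1_r. apply Rmult_le_compat_l. apply Rlt_le, Rinv_0_lt_compat; auto.
        apply (HB (z s)); auto.
      + apply Rlt_le, Rinv_0_lt_compat; auto.
    - rewrite Rsum_const. fold m. right. field. lra. }
  assert (T : forall l, sum_n (fun s => Cmult (w s) (Cmult (c l) (pow_n (z s) l))) m' =
     Cmult (Cmult (c l) (RtoC (rho ^ l))) (Cmult (RtoC (/ m)) (Vsum (INR l - INR j) m'))).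
  { intros l. unfold Vsum. rewrite <- sum_mult_l, <- sum_mult_l. apply sum_n_ext. intros s.
    unfold w, z. rewrite pow_n_Cmult, pow_n_RtoC, zeta_pow. fold m.
    replace (INR s * (2 * PI * (INR l - INR j) / m)) with
      ((- INR s * (2 * PI * INR j / m)) + INR l * (INR s * (2 * PI / m))) by (field; lra).
    rewrite <- zeta_mult. cring. }
  set (cj := Cmult (c j) (RtoC (rho ^ j))).
  set (e := fun l => if Nat.eq_dec l j then cj else RtoC 0).
  assert (He : is_series e cj).
  { replace cj with (sum_n e j).
    - apply finite_series. intros l Hl. unfold e. destruct Nat.eq_dec; [lia|reflexivity].
    - rewrite (sum_single _ j j); auto. + unfold e. destruct Nat.eq_dec; [reflexivity|lia].
      + intros k _ Hk. unfold e. destruct Nat.eq_dec; [lia|reflexivity]. }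
  pose proof (@is_series_minus C_AbsRing C_NormedModule _ _ _ _ HA He) as HD.
  set (q := 2 / 3).
  assert (HDb : Cmod (plus A (opp cj)) <= K * q ^ (j + S m') / (1 - q)).
  { apply (Cseries_bound _ _ _ HD). intros n. eapply Rle_trans; [apply Cmod_sum|].
    eapply Rle_trans; [|apply (geom_tail_le K q (j + S m') n); auto; unfold q; lra].
    apply Rsum_le. intros l _. change (plus ?x ?y) with (Cplus x y). change (opp ?x) with (Copp x).
    rewrite T. unfold e. destruct (lt_dec l (j + S m')).
    - destruct (Nat.eq_dec l j) as [->|Hne].
      + rewrite Rminus_diag, Vsum_0. fold m. unfold cj.
        replace (Cplus (Cmult (Cmult (c j) (RtoC (rho ^ j))) (Cmult (RtoC (/ m)) (RtoC m)))
                       (Copp (Cmult (c j) (RtoC (rho ^ j))))) with (RtoC 0).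
        * rewrite Cmod_0. lra.
        * assert (E : Cmult (RtoC (/ m)) (RtoC m) = RtoC 1).
          { unfold RtoC, Cmult. simpl. f_equal; field; lra. }
          rewrite E. cring.
      + destruct (le_lt_dec l j) as [Hl|Hl].
        * rewrite (Vsum_zero (j - l) m') by (first [lia | right; rewrite minus_INR by lia; ring]).
          replace (Cplus (Cmult (Cmult (c l) (RtoC (rho ^ l))) (Cmult (RtoC (/ m)) 0)) (Copp 0)) with (RtoC 0) by cring.
          rewrite Cmod_0. lra.
        * rewrite (Vsum_zero (l - j) m') by (first [lia | left; rewrite minus_INR by lia; ring]).
          replace (Cplus (Cmult (Cmult (c l) (RtoC (rho ^ l))) (Cmult (RtoC (/ m)) 0)) (Copp 0)) with (RtoC 0) by cring.
          rewrite Cmod_0. lra.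
    - destruct (Nat.eq_dec l j); [lia|].
      replace (Cplus (Cmult (Cmult (c l) (RtoC (rho ^ l))) (Cmult (RtoC (/ m)) (Vsum (INR l - INR j) m'))) (Copp 0))
        with (Cmult (Cmult (c l) (RtoC (rho ^ l))) (Cmult (RtoC (/ m)) (Vsum (INR l - INR j) m'))) by cring.
      rewrite !Cmod_mult, !Cmod_RtoC_pos.
      + pose proof (Vsum_bound (INR l - INR j) m'). fold m in H.
        assert (/ m * Cmod (Vsum (INR l - INR j) m') <= 1).
        { apply Rle_trans with (/ m * m). apply Rmult_le_compat_l; auto. apply Rlt_le, Rinv_0_lt_compat; auto.
          right. field. lra. }
        pose proof (Hc l). fold rho q in H1.
        pose proof (Cmod_ge_0 (c l)). pose proof (pow_le rho l ltac:(lra)).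
        assert (0 <= Cmod (c l) * rho ^ l) by (apply Rmult_le_pos; auto).
        apply Rle_trans with (Cmod (c l) * rho ^ l * 1); [apply Rmult_le_compat_l; auto | rewrite Rmult_1_r; exact H1].
      + apply Rlt_le, Rinv_0_lt_compat; auto.
      + apply pow_le; lra. }
  assert (Hcj : Cmod cj <= Cmod A + Cmod (plus A (opp cj))).
  { replace cj with (Cplus A (Copp (plus A (opp cj)))) at 1.
    - eapply Rle_trans; [apply Cmod_triangle|]. rewrite Cmod_opp. lra.
    - change (plus ?x ?y) with (Cplus x y). change (opp ?x) with (Copp x). cring. }
  assert (Ecj : Cmod cj = Cmod (c j) * rho ^ j).
  { unfold cj. rewrite Cmod_mult, Cmod_RtoC_pos by (apply pow_le; lra). reflexivity. }
  fold rho q. lra.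
Qed.


Lemma cauchy (c : fps) r eps : 0 < r -> norm_lt c r eps -> forall j, Cmod (c j) * (r/2)^j < eps.
Proof.
  intros Hr [Hext [M [HM HB]]] j.
  destruct (Hext (RtoC (3 * r / 4))) as [l0 Hl0].
  { rewrite Cmod_RtoC_pos; lra. }
  destruct (terms_bounded _ _ Hl0) as [K [HK0 HK]].
  assert (Hc : forall n, Cmod (c n) * (r/2)^n <= K * (2/3)^n).
  { intros n. specialize (HK n). rewrite Cmod_mult, pow_n_RtoC, Cmod_RtoC_pos in HK by (apply pow_le; lra).
    replace (r / 2) with (3 * r / 4 * (2/3)) by field. rewrite Rpow_mult_distr.
    pose proof (pow_le (2/3) n ltac:(lra)). 
    rewrite <- Rmult_assoc. apply Rmult_le_compat_r; auto. }
  apply Rle_lt_trans with M; auto.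
  destruct (Rle_or_lt (Cmod (c j) * (r / 2) ^ j) M) as [H|H]; auto. exfalso.
  set (d := Cmod (c j) * (r / 2) ^ j - M).
  assert (Hd : 0 < d) by (unfold d; lra).
  destruct (pow_lt_1_zero (2/3) ltac:(rewrite Rabs_pos_eq; lra) (d / (3 * (K + 1)))) as [N HN].
  { apply Rdiv_lt_0_compat; lra. }
  set (m' := Nat.max N j).
  pose proof (key_claim c r M K j m' Hr HK0 ltac:(lia) HB Hext Hc) as KC.
  specialize (HN (j + S m')%nat ltac:(lia)). rewrite Rabs_pos_eq in HN by (apply pow_le; lra).
  set (Q := (2/3) ^ (j + S m')) in *.
  assert (0 <= Q) by (apply pow_le; lra).
  assert (K * Q / (1 - 2/3) = 3 * K * Q) by field.
  assert (3 * (K + 1) * Q < d).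
  { apply Rmult_lt_compat_l with (r := 3 * (K + 1)) in HN; [|lra].
    replace (3 * (K + 1) * (d / (3 * (K + 1)))) with d in HN by (field; lra). lra. }
  unfold d in *. nra.
Qed.


Lemma Cmod_pow_n (z : C) n : Cmod (pow_n z n) = Cmod z ^ n.
Proof.
  induction n.
  - change (Cmod (RtoC 1) = 1). apply Cmod_1.
  - change (Cmod (Cmult z (pow_n z n)) = Cmod z * Cmod z ^ n). rewrite Cmod_mult, IHn. reflexivity.
Qed.

Lemma finite_series_R (a : nat -> R) N : (forall l, (N < l)%nat -> a l = 0) -> ex_series a.
Proof.
  intros H. exists (sum_n a N). unfold is_series.
  apply (filterlim_ext_loc (fun _ => sum_n a N)).
  - exists N. intros n Hn. induction n.
    + replace N with 0%nat by lia. reflexivity.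
    + destruct (Nat.eq_dec N (S n)) as [->|Hne]; [reflexivity|].
      rewrite sum_Sn, <- IHn by lia. rewrite H by lia. change (plus ?x ?y) with (x + y). lra.
  - apply filterlim_const.
Qed.

Lemma zero_norm_lt h r eps : 0 < eps -> norm_lt (fsub h h) r eps.
Proof.
  intros He.
  assert (Z : forall z, is_series (fun n => Cmult (fsub h h n) (pow_n z n)) (RtoC 0)).
  { intros z. replace (RtoC 0) with (sum_n (fun n => Cmult (fsub h h n) (pow_n z n)) 0).
    - apply finite_series. intros l _. unfold fsub. cring.
    - rewrite sum_O. unfold fsub. cring. }
  split.
  - intros z _. exists (RtoC 0). apply Z.
  - exists 0. split; auto. intros z l _ Hl. rewrite (Cseries_unique _ _ _ Hl (Z z)), Cmod_0. lra.
Qed.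

Lemma neq_coef (F G : fps) : F <> G -> exists n, F n <> G n.
Proof.
  intros H. apply NNPP. intro H'. apply H. apply functional_extensionality. intros n.
  apply NNPP. intro H''. apply H'. exists n. exact H''.
Qed.

Lemma Cmod_sym (a b : C) : Cmod (Cminus a b) = Cmod (Cminus b a).
Proof. replace (Cminus a b) with (Copp (Cminus b a)) by cring. apply Cmod_opp. Qed.


Lemma open_part f g w : is_fdiff g -> an_open (fun h => weval w f (fconj h g) <> fid).
Proof.
  intros Hg h Hh Uh.
  destruct (neq_coef _ _ Uh) as [n Hn].
  destruct (rep f g w Hg n) as [e He].
  assert (Hhd : is_fdiff h) by apply Hh.
  set (v0 := eval e h (Cinv (h 1%nat))).
  assert (Hv0 : v0 <> fid n) by (unfold v0; rewrite <- He; auto).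
  set (dl := Cmod (Cminus v0 (fid n))).
  assert (Hdl : 0 < dl).
  { apply Cmod_gt_0. intro E. apply Hv0. transitivity (Cplus (Cminus v0 (fid n)) (fid n)); [cring|]. rewrite E. cring. }
  destruct (eval_cont e h (Cinv (h 1%nat)) dl Hdl) as [eta [Heta Hcont]].
  destruct (inv_cont (h 1%nat) eta (proj2 Hhd) Heta) as [eta2 [Heta2 Hinv]].
  set (D := Nat.max (maxv e) 1).
  set (et := Rmin eta eta2).
  assert (Het : 0 < et) by (apply Rmin_glb_lt; auto).
  set (eps := et / 2 ^ D).
  assert (H2D : 0 < 2 ^ D) by (apply pow_lt; lra).
  assert (Heps : 0 < eps) by (apply Rdiv_lt_0_compat; auto).
  exists h, 1, eps. split; [auto|]. split; [lra|]. split; [auto|]. split.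
  - apply zero_norm_lt. auto.
  - intros k Hk Hball. pose proof (cauchy _ _ _ Rlt_0_1 Hball) as Cb.
    assert (Hcl : forall j, (j <= D)%nat -> Cmod (Cminus (k j) (h j)) < et).
    { intros j Hj. specialize (Cb j). change (fsub k h j) with (Cminus (k j) (h j)) in Cb.
      assert (2 ^ j <= 2 ^ D) by (apply Rle_pow; [lra|auto]).
      assert (P : 0 < (1/2) ^ j) by (apply pow_lt; lra).
      assert (E2 : (1/2)^j * 2^j = 1) by (rewrite <- Rpow_mult_distr; replace (1/2*2) with 1 by field; apply pow1).
      assert (Cmod (Cminus (k j) (h j)) < eps * 2 ^ j).
      { apply Rmult_lt_reg_r with ((1/2)^j); auto.
        replace (eps * 2 ^ j * (1 / 2) ^ j) with eps by (rewrite Rmult_assoc, Rmult_comm with (r1 := 2^j), E2; ring). exact Cb. }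
      assert (eps * 2 ^ j <= et).
      { unfold eps. apply Rle_trans with (et / 2 ^ D * 2 ^ D).
        - apply Rmult_le_compat_l; auto. apply Rlt_le, Rdiv_lt_0_compat; auto.
        - right. field. lra. }
      lra. }
    assert (Hkd : is_fdiff k) by apply Hk.
    intro Ek. apply (f_equal (fun F => F n)) in Ek. rewrite He in Ek by auto.
    assert (Cmod (Cminus (eval e k (Cinv (k 1%nat))) v0) < dl).
    { apply Hcont.
      - intros j Hj. eapply Rlt_le_trans; [apply Hcl; unfold D; lia|]. apply Rmin_l.
      - apply Hinv. eapply Rlt_le_trans; [apply Hcl; unfold D; lia|]. apply Rmin_r. }
    rewrite Ek in H. unfold dl in H. rewrite Cmod_sym in H. lra.
Qed.


Lemma dense_part f g w : is_fdiff g ->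
  (exists hh : fps, is_fdiff hh /\ weval w f (fconj hh g) <> fid) ->
  an_dense (fun h => weval w f (fconj h g) <> fid).
Proof.
  intros Hg [hh [Hhh Uhh]] V HV [g0 [Hg0 HVg0]].
  destruct (HV g0 Hg0 HVg0) as [f' [r [eps [Hf' [Hr [He [Hball Hsub]]]]]]].
  destruct Hball as [Hext [M [HM HB]]].
  destruct (neq_coef _ _ Uhh) as [n Hn].
  destruct (rep f g w Hg n) as [e Hrep].
  set (D := Nat.max (maxv e) 1).
  set (p := fun j => if le_dec 1 j then if le_dec j D then Cminus (hh j) (g0 j) else RtoC 0 else RtoC 0).
  set (L := fun t => kt g0 p t 1%nat).
  destruct (path_poly g0 p e) as [m [psi [Ppsi Hpsi]]].
  set (Phi := fun t => Cmult (Cplus (psi t) (Cmult (Copp (fid n)) (pow_n (L t) m))) (L t)).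
  assert (PPhi : cpoly Phi).
  { apply poly_mul; [apply poly_add; [auto|apply poly_scal; apply poly_pow; apply poly_kt]|apply poly_kt]. }
  assert (Hg00 : g0 0%nat = RtoC 0) by apply Hg0.
  assert (K1 : forall j, (j <= D)%nat -> kt g0 p 1 j = hh j).
  { intros j Hj. unfold kt, p. destruct (le_dec 1 j).
    - destruct le_dec; [|lia]. cring.
    - replace j with 0%nat by lia. rewrite Hg00, (proj1 Hhh). cring. }
  assert (HL1 : L 1 = hh 1%nat) by (apply K1; unfold D; lia).
  assert (Phi1 : Phi 1 <> RtoC 0).
  { unfold Phi. rewrite <- (Hpsi 1) by (change (L 1 <> RtoC 0); rewrite HL1; apply Hhh).
    change (kt g0 p 1 1%nat) with (L 1).
    rewrite (eval_agree e (kt g0 p 1) hh) by (intros; apply K1; unfold D; lia).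
    rewrite HL1, <- Hrep by auto.
    replace (Cmult (Cplus (Cmult (weval w f (fconj hh g) n) (pow_n (hh 1%nat) m)) (Cmult (Copp (fid n)) (pow_n (hh 1%nat) m))) (hh 1%nat))
      with (Cmult (Cmult (Cminus (weval w f (fconj hh g) n) (fid n)) (pow_n (hh 1%nat) m)) (hh 1%nat)) by cring.
    apply Cmult_neq_0; [apply Cmult_neq_0|apply Hhh].
    - intro E. apply Hn. transitivity (Cplus (Cminus (weval w f (fconj hh g) n) (fid n)) (fid n)); [cring|]. rewrite E. cring.
    - clear -Hhh. induction m.
      + intro E. injection E. lra.
      + change (Cmult (hh 1%nat) (pow_n (hh 1%nat) m) <> RtoC 0). apply Cmult_neq_0; auto. apply Hhh. }
  set (B := sum_n (fun j => Cmod (p j) * r ^ j) D).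
  assert (HB0 : 0 <= B).
  { unfold B. apply Rle_trans with (sum_n (fun _ => 0) D). rewrite Rsum_const. lra.
    apply Rsum_le. intros. apply Rmult_le_pos; [apply Cmod_ge_0|apply pow_le; lra]. }
  set (tau := Rmin 1 ((eps - M) / (B + 1))).
  assert (Htau : 0 < tau) by (apply Rmin_glb_lt; [lra|apply Rdiv_lt_0_compat; lra]).
  destruct (poly_nonzero_near0 Phi PPhi (ex_intro _ 1 Phi1) tau Htau) as [t [Ht HPt]].
  assert (Ht1 : t <= 1) by (pose proof (Rmin_l 1 ((eps - M) / (B + 1))); fold tau in H; lra).
  assert (HtB : t * B < eps - M).
  { pose proof (Rmin_r 1 ((eps - M) / (B + 1))). fold tau in H.
    apply Rle_lt_trans with (t * (B + 1)); [nra|].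
    apply Rlt_le_trans with ((eps - M) / (B + 1) * (B + 1)); [apply Rmult_lt_compat_r; lra|].
    right. field. lra. }
  set (k := kt g0 p t).
  assert (HLt : L t <> RtoC 0).
  { intro E. apply HPt. unfold Phi. rewrite E. cring. }
  assert (Hkd : is_fdiff k).
  { split.
    - unfold k, kt, p. rewrite Hg00. destruct le_dec; [lia|]. cring.
    - exact HLt. }
  exists k. split; [|split].
  -
    split; auto. destruct Hg0 as [_ [r0 [Hr0 Hs0]]]. exists r0. split; auto.
    apply (@ex_series_le R_AbsRing R_CompleteNormedModule _ (fun j => Cmod (g0 j) * r0 ^ j + t * (Cmod (p j) * r0 ^ j))).
    + intros j. change (norm ?x) with (Rabs x). rewrite Rabs_pos_eq by (apply Rmult_le_pos; [apply Cmod_ge_0|apply pow_le; lra]).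
      unfold k, kt. pose proof (pow_le r0 j ltac:(lra)).
      pose proof (Cmod_triangle (g0 j) (Cmult (RtoC t) (p j))). rewrite Cmod_mult, Cmod_R, Rabs_pos_eq in H0 by lra.
      nra.
    + apply (@ex_series_plus R_AbsRing R_NormedModule); auto.
      apply (@ex_series_scal R_AbsRing R_NormedModule t (fun j => Cmod (p j) * r0 ^ j)).
      apply (finite_series_R _ D). intros l Hl. unfold p. destruct le_dec; [destruct le_dec; [lia|]|];
        rewrite Cmod_0; ring.
  -
    apply Hsub.
    + split; auto. destruct Hg0 as [_ [r0 [Hr0 Hs0]]]. exists r0. split; auto.
      apply (@ex_series_le R_AbsRing R_CompleteNormedModule _ (fun j => Cmod (g0 j) * r0 ^ j + t * (Cmod (p j) * r0 ^ j))).
      * intros j. change (norm ?x) with (Rabs x). rewrite Rabs_pos_eq by (apply Rmult_le_pos; [apply Cmod_ge_0|apply pow_le; lra]).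
        unfold k, kt. pose proof (pow_le r0 j ltac:(lra)).
        pose proof (Cmod_triangle (g0 j) (Cmult (RtoC t) (p j))). rewrite Cmod_mult, Cmod_R, Rabs_pos_eq in H0 by lra.
        nra.
      * apply (@ex_series_plus R_AbsRing R_NormedModule); auto.
        apply (@ex_series_scal R_AbsRing R_NormedModule t (fun j => Cmod (p j) * r0 ^ j)).
        apply (finite_series_R _ D). intros l Hl. unfold p. destruct le_dec; [destruct le_dec; [lia|]|];
          rewrite Cmod_0; ring.
    + set (qz := fun z j => Cmult (Cmult (RtoC t) (p j)) (pow_n z j)).
      assert (Hq : forall z, is_series (qz z) (sum_n (qz z) D)).
      { intros z. apply finite_series. intros l Hl. unfold qz, p. destruct le_dec; [destruct le_dec; [lia|]|]; cring. }
      assert (Hsplit : forall z l1, is_series (fun j => Cmult (fsub g0 f' j) (pow_n z j)) l1 ->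
         is_series (fun j => Cmult (fsub k f' j) (pow_n z j)) (plus l1 (sum_n (qz z) D))).
      { intros z l1 H1. apply (is_series_ext (fun j => plus (Cmult (fsub g0 f' j) (pow_n z j)) (qz z j))).
        - intros j. unfold qz, fsub, k, kt. change (plus ?x ?y) with (Cplus x y). cring.
        - apply (@is_series_plus C_AbsRing C_NormedModule); auto. }
      split.
      * intros z Hz. destruct (Hext z Hz) as [l1 Hl1]. exists (plus l1 (sum_n (qz z) D)). apply Hsplit; auto.
      * exists (M + t * B). split; [lra|]. intros z l Hz Hl.
        destruct (Hext z Hz) as [l1 Hl1].
        rewrite (Cseries_unique _ _ _ Hl (Hsplit z l1 Hl1)).
        change (plus ?x ?y) with (Cplus x y).
        eapply Rle_trans; [apply Cmod_triangle|]. apply Rplus_le_compat; [apply (HB z); auto|].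
        eapply Rle_trans; [apply Cmod_sum|]. unfold B.
        replace (t * sum_n (fun j => Cmod (p j) * r ^ j) D) with (sum_n (fun j => t * (Cmod (p j) * r ^ j)) D)
          by (apply (sum_n_mult_l t (fun j => Cmod (p j) * r ^ j) D)).
        apply Rsum_le. intros j _. unfold qz. rewrite !Cmod_mult, Cmod_R, Rabs_pos_eq, Cmod_pow_n by lra.
        assert (Cmod z ^ j <= r ^ j) by (apply pow_incr; split; [apply Cmod_ge_0|lra]).
        pose proof (Cmod_ge_0 (p j)). rewrite Rmult_assoc. apply Rmult_le_compat_l; [lra|]. apply Rmult_le_compat_l; auto.
  -
    intro E. apply (f_equal (fun F => F n)) in E. rewrite Hrep in E by auto.
    apply HPt. unfold Phi. rewrite <- Hpsi by auto.
    assert (E' : eval e (kt g0 p t) (Cinv (L t)) = fid n) by exact E.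
    change (kt g0 p t 1%nat) with (L t). rewrite E'. cring.
Qed.


Theorem theorem2p5 :
  forall (f g : fps) (w : list letter),
    is_germ f -> is_germ g -> f <> fid -> g <> fid ->
    w <> nil -> reduced w ->
    (exists hh : fps, is_fdiff hh /\ weval w f (fconj hh g) <> fid) ->
    (exists h : fps, is_germ h /\ weval w f (fconj h g) <> fid) /\
    an_open (fun h => weval w f (fconj h g) <> fid) /\
    an_dense (fun h => weval w f (fconj h g) <> fid).
Proof.
  intros f g w Hf Hg _ _ _ _ Hhh.
  assert (Hgd : is_fdiff g) by apply Hg.
  pose proof (open_part f g w Hgd) as Hopen.
  pose proof (dense_part f g w Hgd Hhh) as Hdense.
  split; [|split; auto].
  destruct (Hdense (fun _ => True)) as [h [Hh [_ Uh]]].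
  - intros g' Hg' _. exists g', 1, 1. split; [exact Hg'|]. split; [lra|]. split; [lra|].
    split; [apply zero_norm_lt; lra|]. intros; exact I.
  - exists f. split; auto.
  - exists h. split; auto.
Qed.
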